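(* Let $R$ be a commutative Noetherian ring with unity and let $x,y$ be nonzero zero divisors of $R$. If $0\neq\operatorname{ann}(x)\subsetneq\operatorname{ann}(y)$, then $\deg[x]\le\deg[y]$ in $\Gamma_E(R)$.
   Context: For $x,y\in R$ write $x\sim y$ iff $\operatorname{ann}(x)=\operatorname{ann}(y)$; $[x]$ denotes the equivalence class of $x$. Let $Z^*(R)$ be the set of nonzero zero divisors of $R$. The graph $\Gamma_E(R)$ is the simple graph whose vertices are the classes $[x]$ with $x\in Z^*(R)$, two distinct vertices $[x],[y]$ being adjacent iff $xy=0$. The degree $\deg[x]$ of a vertex is the number (possibly infinite) of vertices adjacent to it. *)

(* Defs.v *)
From HB Require Import structures.
From mathcomp Require Import all_boot all_algebra.
From mathcomp Require Import boolp classical_sets functions cardinality.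
Set Implicit Arguments. Unset Strict Implicit. Unset Printing Implicit Defensive.
Import GRing.Theory.
Local Open Scope ring_scope.
Local Open Scope classical_set_scope.

Section ZeroDivisorGraph.
Variable R : comNzRingType.

Definition is_ideal (I : set R) : Prop :=
  I 0 /\ (forall a b, I a -> I b -> I (a + b)) /\ (forall r a, I a -> I (r * a)).

Definition noetherian : Prop :=
  forall I : nat -> set R, (forall n, is_ideal (I n)) ->
    (forall n, I n `<=` I n.+1) ->
    exists N, forall n, (N <= n)%N -> I n = I N.

Definition ann (x : R) : set R := [set r | r * x = 0].

Definition Zstar : set R := [set x | x != 0 /\ exists y, y != 0 /\ x * y = 0].

Definition eclass (x : R) : set R := [set y | ann y = ann x].

(* vertices of Gamma_E(R) adjacent to [x]: the set of classes [z], z in Z*(R),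
   distinct from [x], with z x = 0.  deg[x] is the cardinality of this set. *)
Definition nbhdE (x : R) : set (set R) :=
  [set C | exists z, Zstar z /\ C = eclass z /\ eclass z <> eclass x /\ z * x = 0].

End ZeroDivisorGraph.

(* Main.v *)
Require Import Defs.
From mathcomp Require Import all_boot all_algebra.
From mathcomp Require Import boolp classical_sets functions cardinality.
Import GRing.Theory.
Local Open Scope ring_scope.
Local Open Scope classical_set_scope.

Theorem proposition2p1 (R : comNzRingType) (x y : R) :
  noetherian R -> Zstar x -> Zstar y ->
  ann x <> [set 0] -> ann x `<` ann y ->
  (nbhdE x #<= nbhdE y)%card.
Proof.
move=> _ Zx Zy _ [sxy nxy].
have exy : eclass x <> eclass y.
  move=> e; apply: nxy.
  have : x \in eclass y by rewrite -e inE.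
  by rewrite inE => ->.
have eq_ann : forall z w : R, eclass z = eclass w -> ann z = ann w.
  move=> z w e; have : z \in eclass w by rewrite -e inE.
  by rewrite inE.
pose f := fun C : set R => if `[< C = eclass y >] then eclass x else C.
apply: (@card_le_trans _ _ _ (f @` nbhdE x)).
  have finj : {in nbhdE x &, injective f}; last first.
    by have /card_eqPle[] := inj_card_eq finj.
  move=> C D; rewrite !inE => -[z [Zz [-> [nzx zx]]]] -[w [Zw [-> [nwx wx]]]].
  rewrite /f; case: asboolP => e1; case: asboolP => e2 //.
    1-2: by move=> e; first [ by rewrite e1 e2 | by exfalso; apply: nwx; exact: esym e
     | by exfalso; apply: nzx; exact: e ].
apply: subset_card_le => _ [C [z [Zz [-> [nzx zx]]]] <-].
rewrite /f; case: asboolP => e.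
  exists x; split => //; split => //; split; first by move=> h; apply: exy.
  have : x \in ann z by rewrite inE /ann /= mulrC.
  by rewrite inE (eq_ann _ _ e) /ann /= mulrC.
exists z; split => //; split => //; split => //.
by apply: sxy.
Qed.
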